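(* For every even $n\ge 6$, $$|E_n| = 4\,|E_{n-2}| - \mathrm{Cat}(n/2-1) = 2\,|E_{n-1}| - \mathrm{Cat}(n/2-1),$$ where $\mathrm{Cat}(k)=\frac{1}{k+1}\binom{2k}{k}$ is the $k$-th Catalan number.
   Context: Let $D$ (OEIS A036991) be the set of nonnegative integers $m$ such that, reading the binary expansion of $m$ from the least significant bit to the most significant bit, at every point the number of 1's read so far is at least the number of 0's read so far. For $n\ge1$ let $M_n=2^n-1$ and let the $n$-level be $E_n=D\cap(M_{n-1},M_n]$, i.e. the elements of $D$ whose binary expansion has exactly $n$ digits. *)

(* Defs.v *)
From mathcomp Require Import all_boot all_order all_algebra.
Set Implicit Arguments. Unset Strict Implicit. Unset Printing Implicit Defensive.

Fixpoint bits_aux (fuel m : nat) : seq bool :=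
  match fuel with
  | 0 => [::]
  | f.+1 => if m == 0 then [::] else odd m :: bits_aux f m./2
  end.
Definition bits (m : nat) : seq bool := bits_aux m m.

(* m is in D (OEIS A036991): reading bits from LSB to MSB, at every prefix
   the number of 1's is at least the number of 0's. *)
Definition inD (m : nat) : bool :=
  all (fun k => count_mem false (take k (bits m)) <= count_mem true (take k (bits m)))
      (iota 0 (size (bits m)).+1).

Definition M (n : nat) : nat := 2 ^ n - 1.

(* E_n = D ∩ (M_{n-1}, M_n], as a list of the elements *)
Definition E (n : nat) : seq nat :=
  [seq m <- iota (M n.-1).+1 (M n - M n.-1) | inD m].

Definition catalan (k : nat) : nat := 'C(k.*2, k) %/ k.+1.

Example bits6 : bits 6 = [:: false; true; true]. Proof. by []. Qed.
Example E_sizes : [seq size (E k) | k <- iota 1 6] = [:: 1; 1; 2; 3; 6; 10]. Proof. by vm_compute. Qed.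

(* Main.v *)
Require Import Defs.
From mathcomp Require Import all_boot all_order all_algebra zify.

Fixpoint lowbits (L r : nat) : seq bool :=
  if L is L'.+1 then odd r :: lowbits L' r./2 else [::].

Lemma halfE m : m = odd m + (m./2).*2. Proof. by rewrite odd_double_half. Qed.

Lemma lowbits_lo L r : r < 2 ^ L -> lowbits L.+1 r = rcons (lowbits L r) false.
Proof.
elim: L r => [|L IH] r hr /=.
  by move: hr; rewrite expn0; case: r.
rewrite -IH //; move: hr; rewrite expnS => hr.
have := halfE r; lia.
Qed.

Lemma lowbits_hi L r : r < 2 ^ L -> lowbits L.+1 (2 ^ L + r) = rcons (lowbits L r) true.
Proof.
elim: L r => [|L IH] r hr /=.
  by move: hr; rewrite expn0; case: r.
rewrite oddD oddX /= halfD oddX /=.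
have -> : (2 ^ L.+1)./2 = 2 ^ L by rewrite expnS mul2n doubleK.
rewrite -IH //; move: hr; rewrite expnS => hr.
have := halfE r; lia.
Qed.

Lemma bits_auxE n f m : n < f -> 2 ^ n <= m < 2 ^ n.+1 -> bits_aux f m = lowbits n.+1 m.
Proof.
elim: n f m => [|n IH] [|f] m //= hf.
  rewrite expn0 expn1 => hm; have -> : m = 1 by lia.
  by case: f {hf}.
move=> hm; have m0 : (m == 0) = false by apply/eqP; move: hm; rewrite expnS; lia.
rewrite m0 (IH f) //.
move: hm; rewrite !expnS => hm; have := halfE m; lia.
Qed.

Lemma bitsE n m : 2 ^ n <= m < 2 ^ n.+1 -> bits m = lowbits n.+1 m.
Proof.
move=> hm; apply: bits_auxE => //.
have := ltn_expl n (ltnSn 1); lia.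
Qed.

Definition okseq (s : seq bool) : bool :=
  all (fun k => count_mem false (take k s) <= count_mem true (take k s))
      (iota 0 (size s).+1).

Lemma inD_ok m : inD m = okseq (bits m). Proof. by []. Qed.

Lemma ok_cnt (s : seq bool) : okseq s -> count_mem false s <= count_mem true s.
Proof.
move/allP => /(_ (size s)); rewrite mem_iota /= take_size; apply; lia.
Qed.

Lemma cnt_rcons (b x : bool) s : count_mem b (rcons s x) = count_mem b s + (x == b).
Proof. by rewrite -cats1 count_cat /= addn0. Qed.

Lemma okseq_rcons s b : okseq (rcons s b) =
  okseq s && (count_mem false (rcons s b) <= count_mem true (rcons s b)).
Proof.
rewrite /okseq.
have -> : iota 0 (size (rcons s b)).+1 = iota 0 (size s).+1 ++ [:: (size s).+1].
  by rewrite size_rcons -[(size s).+2]addn1 iotaD.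
rewrite all_cat all_seq1 take_oversize ?size_rcons //.
congr (_ && _); apply: eq_in_all => k; rewrite mem_iota add0n => hk.
by rewrite -cats1 takel_cat //; lia.
Qed.

Lemma ok_rcons_true s : okseq (rcons s true) = okseq s.
Proof.
rewrite okseq_rcons !cnt_rcons /=; case h: (okseq s) => //=.
by rewrite addn0 addn1; apply/leqW/ok_cnt.
Qed.

Lemma ok_rcons_false s : okseq (rcons s false) =
  okseq s && (count_mem false s < count_mem true s).
Proof. by rewrite okseq_rcons !cnt_rcons /= addn0 addn1. Qed.

Lemma count_split L (P : seq bool -> bool) :
  count (fun r => P (lowbits L.+1 r)) (iota 0 (2 ^ L.+1)) =
  count (fun r => P (rcons (lowbits L r) false)) (iota 0 (2 ^ L)) +
  count (fun r => P (rcons (lowbits L r) true)) (iota 0 (2 ^ L)).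
Proof.
rewrite expnS mul2n -addnn iotaD count_cat.
have -> : iota (0 + 2 ^ L) (2 ^ L) = map (addn (2 ^ L)) (iota 0 (2 ^ L)).
  by rewrite -iotaDl addn0 add0n.
rewrite count_map.
congr (_ + _); apply: eq_in_count => r; rewrite mem_iota add0n => hr.
  by rewrite lowbits_lo.
by rewrite -lowbits_hi.
Qed.

Definition Pc L := count (fun r => okseq (lowbits L r)) (iota 0 (2 ^ L)).
Definition A L e := count (fun r => okseq (lowbits L r) &&
  (count_mem true (lowbits L r) == count_mem false (lowbits L r) + e)) (iota 0 (2 ^ L)).

Lemma count_andC T (a p : pred T) s :
  count a s = count (fun x => a x && p x) s + count (fun x => a x && ~~ p x) s.
Proof.
elim: s => //= x s ->; case: (a x); case: (p x) => /=; lia.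
Qed.

Lemma Pc_rec L : Pc L.+1 + A L 0 = (Pc L).*2.
Proof.
rewrite /Pc count_split.
have -> : count (fun r => okseq (rcons (lowbits L r) true)) (iota 0 (2 ^ L)) = Pc L.
  by apply: eq_count => r; rewrite ok_rcons_true.
have -> : count (fun r => okseq (rcons (lowbits L r) false)) (iota 0 (2 ^ L)) =
  count (fun r => okseq (lowbits L r) && ~~ (count_mem true (lowbits L r) == count_mem false (lowbits L r) + 0)) (iota 0 (2 ^ L)).
  apply: eq_count => r /=; rewrite ok_rcons_false addn0.
  case h: (okseq _) => //=.
  have := @ok_cnt _ h; rewrite ltn_neqAle; case: eqP => [->|]; rewrite ?eqxx //=.
  by move=> ne le; rewrite le; apply/esym/eqP => e; apply: ne.
have := count_andC _ (fun r => okseq (lowbits L r)) (fun r => count_mem true (lowbits L r) == count_mem false (lowbits L r) + 0) (iota 0 (2 ^ L)).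
rewrite -/(Pc L) -/(A L 0) => ->.
rewrite -addnn; lia.
Qed.

Lemma P_false s e : (okseq (rcons s false) && (count_mem true (rcons s false) == count_mem false (rcons s false) + e)) = okseq s && (count_mem true s == count_mem false s + e.+1).
Proof.
rewrite ok_rcons_false !cnt_rcons /=; case h: (okseq s) => //=.
move: (count_mem true s) (count_mem false s) => a b.
apply/idP/idP; lia.
Qed.

Lemma P_true s e : (okseq (rcons s true) && (count_mem true (rcons s true) == count_mem false (rcons s true) + e)) =
  if e is e'.+1 then okseq s && (count_mem true s == count_mem false s + e') else false.
Proof.
rewrite ok_rcons_true !cnt_rcons /=; case h: (okseq s) => //=; last by case: e.
have := @ok_cnt _ h.
move: (count_mem true s) (count_mem false s) => a b.
move=> hab; case: e => [|e]; apply/idP/idP; lia.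
Qed.

Lemma A_0 e : A 0 e = (e == 0).
Proof. by rewrite /A /=; case: e. Qed.

Lemma A_S0 L : A L.+1 0 = A L 1.
Proof.
rewrite /A (count_split L (fun s => okseq s && (count_mem true s == count_mem false s + 0))).
under eq_count => r do rewrite P_false.
under [X in _ + X]eq_count => r do rewrite P_true.
by rewrite count_pred0 addn0.
Qed.

Lemma A_SS L e : A L.+1 e.+1 = A L e.+2 + A L e.
Proof.
rewrite /A (count_split L (fun s => okseq s && (count_mem true s == count_mem false s + e.+1))).
under eq_count => r do rewrite P_false.
by under [X in _ + X]eq_count => r do rewrite P_true.
Qed.

Lemma A_closed L : (forall e, L < e -> A L e = 0) /\
  (forall e d, L = e + d.*2 + 1 -> A L e = 0) /\
  (forall e d, L = e + d.*2 -> A L e + 'C(L, d + e + 1) = 'C(L, d)).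
Proof.
elim: L => [|L [IH1 [IH2 IH3]]].
  split; first by move=> [|e] //; rewrite A_0.
  split; first by move=> e d; lia.
  move=> e d h; have [-> ->] : e = 0 /\ d = 0 by lia.
  by rewrite A_0.
split.
  move=> [|e] he //; rewrite A_SS IH1 ?IH1 //; lia.
split.
  move=> [|e] [|d] he.
  - rewrite A_S0 IH1 //; lia.
  - rewrite A_S0 (IH2 1 d) //; lia.
  - rewrite A_SS IH1 ?(IH2 e 0) //; lia.
  - rewrite A_SS (IH2 e.+2 d) ?(IH2 e d.+1) //; lia.
move=> [|e] [|d] he.
- lia.
- rewrite A_S0.
  have H := IH3 1 d.
  have -> : d.+1 + 0 + 1 = (d + 1).+1 by lia.
  rewrite !binS.
  have E1 : d + 1 + 1 = (d + 1).+1 by lia.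
  rewrite E1 in H; rewrite addn1 in H *.
  rewrite -H; [lia | lia].
- rewrite A_SS IH1; last by lia.
  have := IH3 e 0; rewrite !add0n bin0 => H.
  rewrite bin0 bin_small; last by lia.
  rewrite bin_small in H; last by lia.
  apply: H; lia.
- rewrite A_SS.
  have H1 := IH3 e.+2 d; have H2 := IH3 e d.+1.
  have -> : d.+1 + e.+1 + 1 = (d + e.+2).+1 by lia.
  rewrite !binS.
  have E1 : d.+1 + e + 1 = d + e.+2 by lia.
  have E2 : d + e.+2 + 1 = (d + e.+2).+1 by lia.
  rewrite E1 in H2; rewrite E2 in H1.
  rewrite -H1 -?H2; lia.
Qed.

Lemma sizeE n : size (E n.+1) = Pc n.
Proof.
have hp : 0 < 2 ^ n by rewrite expn_gt0.
rewrite /E /M /=.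
have -> : (2 ^ n - 1).+1 = 2 ^ n + 0 by lia.
have -> : 2 ^ n.+1 - 1 - (2 ^ n - 1) = 2 ^ n by rewrite expnS; lia.
rewrite size_filter iotaDl count_map /Pc; apply: eq_in_count => r.
rewrite mem_iota add0n => hr /=.
rewrite inD_ok (bitsE n); last by rewrite expnS; lia.
by rewrite lowbits_hi // ok_rcons_true.
Qed.

Lemma catalanE j : catalan j = A (j.*2) 0.
Proof.
have H := (A_closed (j.*2)).2.2 0 j (esym (add0n _)).
have H2 := mul_bin_left (j.*2) j.
rewrite addn0 addn1 in H.
have H3 : 'C(j.*2, j) = A (j.*2) 0 * j.+1.
  have hj : j.*2 - j = j by lia.
  rewrite hj in H2; nia.
by rewrite /catalan H3 mulnK.
Qed.

Lemma A_odd i : A (i.*2).+1 0 = 0.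
Proof. by apply: ((A_closed (i.*2).+1).2.1 0 i); lia. Qed.

Local Open Scope ring_scope.

Theorem proposition10 (n : nat) :
  (6 <= n)%N -> ~~ odd n ->
  (size (E n))%:Z = 4 * (size (E (n - 2)))%:Z - (catalan (n./2 - 1))%:Z /\
  (size (E n))%:Z = 2 * (size (E n.-1))%:Z - (catalan (n./2 - 1))%:Z.
Proof.
move=> h6 hev.
have [i hi] : exists i, n = (i.*2 + 4)%N.
  exists (n./2 - 2)%N; have := odd_double_half n; rewrite (negbTE hev) add0n; lia.
subst n.
have s1 : size (E (i.*2 + 4)) = Pc (i.*2 + 3).
  by rewrite -sizeE; congr (size (E _)); lia.
have s2 : size (E (i.*2 + 4).-1) = Pc (i.*2 + 2).
  by rewrite -sizeE; congr (size (E _)); lia.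
have s3 : size (E (i.*2 + 4 - 2)) = Pc (i.*2 + 1).
  by rewrite -sizeE; congr (size (E _)); lia.
have c : catalan ((i.*2 + 4)./2 - 1) = A (i.*2 + 2) 0.
  rewrite catalanE; congr (A _ 0).
  have -> : (i.*2 + 4 = (i + 2).*2)%N by lia.
  rewrite doubleK; lia.
have r1 : (Pc (i.*2 + 3) + A (i.*2 + 2) 0 = (Pc (i.*2 + 2)).*2)%N.
  by rewrite -Pc_rec; congr (Pc _ + _)%N; lia.
have r2 : (Pc (i.*2 + 2) + A (i.*2 + 1) 0 = (Pc (i.*2 + 1)).*2)%N.
  by rewrite -Pc_rec; congr (Pc _ + _)%N; lia.
have a0 : A (i.*2 + 1) 0 = 0%N by rewrite addn1 A_odd.
rewrite s1 s2 s3 c.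
lia.
Qed.
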